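(* Let $\mathcal C=\{c_1,\ldots,c_m\}$ and let $n\ge 6(m-2)$. Suppose the manipulator has no information, i.e. the information set is $E=\mathcal F_n$, the set of all $n$-profiles of linear orders on $\mathcal C$. Then every positional scoring rule (with ties broken in the order $c_1\succ\cdots\succ c_m$) is immune to dominating manipulation: for every linear order $V_M$ on $\mathcal C$, no linear order $U$ on $\mathcal C$ dominates $V_M$.
   Context: A positional scoring rule is given by a scoring vector $(s(1),\ldots,s(m))$ of integers with $s(1)\ge s(2)\ge\cdots\ge s(m)$; each vote gives $s(i)$ points to the alternative in its $i$-th position, and the alternative with the highest total wins, ties broken in favor of smallest index. There are $n$ non-manipulators and one manipulator with true preferences $V_M$. Given an information set $E$ (set of $n$-profiles of the non-manipulators), a vote $U$ dominates a vote $V$ if for every $P\in E$, $r(P\cup\{U\})$ is ranked weakly above $r(P\cup\{V\})$ in $V_M$, and for some $P'\in E$ strictly above. Immunity means that for every $V_M$ no vote dominates $V_M$. *)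

(* Defs.v *)
From mathcomp Require Import all_boot all_order all_algebra all_fingroup.
Set Implicit Arguments. Unset Strict Implicit. Unset Printing Implicit Defensive.
Import Order.TTheory GRing.Theory Num.Theory.
Local Open Scope ring_scope.

(* Alternatives: 'I_m.+1, i.e. c_1,...,c_{m+1} with c_{k+1} = index k.
   A vote (linear order) is a permutation V : {perm 'I_m.+1} where
   V c is the (0-based) position of alternative c (0 = top). *)
Definition vote (m : nat) := {perm 'I_m.+1}.

Definition scoring_vector (m : nat) (s : 'I_m.+1 -> int) : Prop :=
  forall i j : 'I_m.+1, (i <= j)%N -> s j <= s i.

Definition total_score (m n : nat) (s : 'I_m.+1 -> int)
  (P : {ffun 'I_n -> vote m}) (U : vote m) (c : 'I_m.+1) : int :=
  \sum_(i < n) s (P i c) + s (U c).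

(* winner: highest total score, ties broken in favour of the smallest index.
   The picked alternative exists and is unique; ord0 is an unused default. *)
Definition winner (m n : nat) (s : 'I_m.+1 -> int)
  (P : {ffun 'I_n -> vote m}) (U : vote m) : 'I_m.+1 :=
  let sc := total_score s P U in
  odflt ord0 [pick c | [forall d, (sc d < sc c) || ((sc d == sc c) && (c <= d)%N)]].

Definition dominates (m n : nat) (s : 'I_m.+1 -> int)
  (E : {ffun 'I_n -> vote m} -> Prop) (VM U V : vote m) : Prop :=
  (forall P, E P -> (VM (winner s P U) <= VM (winner s P V))%N) /\
  (exists P, E P /\ (VM (winner s P U) < VM (winner s P V))%N).

Definition full_info_set (m n : nat) : {ffun 'I_n -> vote m} -> Prop :=
  fun _ => True.

Definition immune (m n : nat) (s : 'I_m.+1 -> int)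
  (E : {ffun 'I_n -> vote m} -> Prop) : Prop :=
  forall VM : vote m, ~ exists U : vote m, dominates s E VM U VM.

(* Main.v *)
Require Import Defs.
From mathcomp Require Import all_boot all_order all_algebra all_fingroup.
From mathcomp Require Import zify.
Set Implicit Arguments. Unset Strict Implicit. Unset Printing Implicit Defensive.
Import Order.TTheory GRing.Theory Num.Theory.
Local Open Scope ring_scope.

Lemma winner_eq m n (s : 'I_m.+1 -> int) (P : {ffun 'I_n -> vote m}) (U : vote m) (w : 'I_m.+1) :
  (forall d, d != w -> total_score s P U d < total_score s P U w \/
     (total_score s P U d = total_score s P U w /\ (w < d)%N)) ->
  winner s P U = w.
Proof.
move=> H; rewrite /winner.
set sc := total_score s P U.
have predw : [forall d, (sc d < sc w) || ((sc d == sc w) && (w <= d)%N)].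
  apply/forallP => d; case: (eqVneq d w) => [->|dw]; first by rewrite eqxx leqnn orbT.
  move: (H d dw); rewrite -/sc => -[->//|[-> /ltnW ->]]; by rewrite eqxx orbT.
case: pickP => [x /forallP Hx | /(_ w)]; last by rewrite predw.
move/forallP: predw => Hw /=.
have := Hx w; have := Hw x.
case/orP => [lt1|/andP[/eqP e1 le1]]; case/orP => [lt2|/andP[/eqP e2 le2]].
- by have := lt_trans lt1 lt2; rewrite ltxx.
- by move: lt1; rewrite e2 ltxx.
- by move: lt2; rewrite e1 ltxx.
- by apply/val_inj/eqP; rewrite eqn_leq le1 le2.
Qed.

Lemma thr m (s : 'I_m.+1 -> int) (X Y : vote m) c :
  s (X c) < s (Y c) -> exists e, s (Y e) < s (Y c) /\ s (Y c) <= s (X e).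
Proof.
move=> lt.
set t := s (Y c).
set T := [set i : 'I_m.+1 | t <= s i].
have cX : #|X @^-1: T| = #|T| by rewrite card_preimset //; exact: perm_inj.
have cY : #|Y @^-1: T| = #|T| by rewrite card_preimset //; exact: perm_inj.
have : ~~ (X @^-1: T \subset Y @^-1: T).
  apply/negP => sub.
  have /eqP E : X @^-1: T == Y @^-1: T by rewrite eqEcard sub cX cY leqnn.
  have : c \in Y @^-1: T by rewrite !inE.
  by rewrite -E !inE leNgt lt.
case/subsetPn => e; rewrite !inE -ltNge => eX eY.
by exists e.
Qed.

Lemma sum_n (g : nat -> int) n :
  \sum_(i < n) g i = \sum_(j < n./2) (g j.*2 + g j.*2.+1) + (if odd n then g (n./2).*2 else 0).
Proof.
have H : forall k, \sum_(i < k.*2) g i = \sum_(j < k) (g j.*2 + g j.*2.+1).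
  elim=> [|k IH]; first by rewrite !big_ord0.
  by rewrite doubleS !big_ord_recr /= IH addrA.
have H2 : forall k (b : bool), \sum_(i < (b + k.*2)%N) g i =
    \sum_(j < k) (g j.*2 + g j.*2.+1) + (if b then g k.*2 else 0).
  move=> k [] /=; last by rewrite add0n H addr0.
  by rewrite add1n big_ord_recr /= H.
by have := H2 n./2 (odd n); rewrite odd_double_half.
Qed.

Lemma le_sum1 (g : nat -> int) lo hi j : (forall i, 0 <= g i) ->
  (lo <= j < hi)%N -> g j <= \sum_(lo <= i < hi) g i.
Proof.
move=> g0 /andP[lj jh].
rewrite (big_cat_nat lj (ltnW jh)) /= [\sum_(j <= i < hi) _]big_ltn //.
by rewrite addrCA lerDl addr_ge0 // sumr_ge0.
Qed.

Lemma le_sum3 (g : nat -> int) K j1 j2 j3 : (forall i, 0 <= g i) ->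
  (j1 < j2)%N -> (j2 < j3)%N -> (j3 < K)%N ->
  g j1 + g j2 + g j3 <= \sum_(j < K) g j.
Proof.
move=> g0 l12 l23 l3.
rewrite -(big_mkord xpredT) (big_cat_nat (leq0n j1.+1) (ltnW (leq_ltn_trans l12 (ltn_trans l23 l3)))) /=.
rewrite (@big_cat_nat _ _ _ j2.+1 j1.+1 K _ _ (ltnW l12) (ltn_trans l23 l3)) /=.
have h1 := @le_sum1 g 0 j1.+1 j1 g0 (ltnSn j1).
have h2 := @le_sum1 g j1.+1 j2.+1 j2 g0 (introT andP (conj l12 (ltnSn j2))).
have h3 := @le_sum1 g j2.+1 K j3 g0 (introT andP (conj l23 l3)).
by rewrite -addrA lerD // lerD.
Qed.

Lemma ordE m (x y : 'I_m) : (x == y) = (nat_of_ord x == nat_of_ord y).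
Proof. by []. Qed.

Lemma construct m n (s : 'I_m.+1 -> int) (VM U : vote m) (a b : 'I_m.+1) :
  scoring_vector s -> (6 * (m.+1 - 2) <= n)%N ->
  s (VM b) < s (VM a) -> s (U a) < s (U b) ->
  exists P : {ffun 'I_n -> vote m}, winner s P VM = a /\ winner s P U = b.
Proof.
move=> sv hn hV hU.
have ab : a != b by apply/eqP => e; move: hV; rewrite e ltxx.
have m0 : (0 < m)%N.
  rewrite lt0n; apply/eqP => m0; move: ab.
  have : nat_of_ord a = nat_of_ord b by have := ltn_ord a; have := ltn_ord b; lia.
  by move/ord_inj ->; rewrite eqxx.
pose p0 : 'I_m.+1 := ord0.
pose p1 : 'I_m.+1 := inord 1.
have vp1 : nat_of_ord p1 = 1%N by rewrite /p1 inordK // ltnS.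
have p01 : p0 != p1 by rewrite ordE vp1.
pose tp : vote m := tperm p0 p1.
pose s0 := s p0. pose s1 := s p1. pose sm := s ord_max.
have sle0 : forall i, s i <= s0 by move=> i; apply: sv.
have sgem : forall i, sm <= s i by move=> i; apply: sv; rewrite -ltnS.
have sle1 : forall i, i != p0 -> s i <= s1.
  move=> i ip; apply: sv; rewrite vp1 lt0n; by rewrite ordE in ip.
pose r1 : vote m := tperm a p0.
have r1a : r1 a = p0 by rewrite /r1 tpermL.
have r1b : r1 b != p0 by rewrite -r1a (inj_eq perm_inj) eq_sym.
pose rho : vote m := (r1 * tperm (r1 b) p1)%g.
have rhoa : rho a = p0 by rewrite /rho permM r1a tpermD // eq_sym.
have rhob : rho b = p1 by rewrite /rho permM tpermL.
pose k (j : nat) : 'I_m.+1 := inord (2 + j %% m.-1).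
pose W (j : nat) : vote m := if (1 < m)%N then (rho * tperm (k j) ord_max)%g else rho.
have vk : (1 < m)%N -> forall j, nat_of_ord (k j) = (2 + j %% m.-1)%N.
  move=> m1 j; rewrite /k inordK //.
  have hm : (0 < m.-1)%N by lia.
  have := ltn_pmod j hm; lia.
have Wa : forall j, W j a = p0.
  move=> j; rewrite /W; case: ifP => m1 //.
  rewrite permM rhoa tpermD //; rewrite ordE /= ?vk //; lia.
have Wb : forall j, W j b = p1.
  move=> j; rewrite /W; case: ifP => m1 //.
  rewrite permM rhob tpermD //; rewrite ordE /= ?vk ?vp1 //; lia.
pose T (c : 'I_m.+1) (j : nat) := s (W j c) + s (tp (W j c)).
have TA : forall j, T a j = s0 + s1 by move=> j; rewrite /T Wa /tp tpermL.
have TB : forall j, T b j = s0 + s1 by move=> j; rewrite /T Wb /tp tpermR addrC.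
have Wc : forall c j, c != a -> c != b -> W j c != p0 /\ W j c != p1.
  move=> c j ca cb; rewrite -{1}(Wa j) -(Wb j) !(inj_eq perm_inj); done.
have TC : forall c j, c != a -> c != b -> T c j <= s0 + s1.
  move=> c j ca cb; have [c0 c1] := Wc c j ca cb.
  rewrite /T /tp tpermD 1?eq_sym //.
  have := sle1 _ c0; have := sle0 p1; rewrite -/s1; lia.
have TV : forall c, c != a -> c != b -> exists k0, (k0 < m.-1)%N /\
    forall t, T c (t * m.-1 + k0)%N = sm + sm.
  move=> c ca cb.
  have qa : rho c != p0 by rewrite -rhoa (inj_eq perm_inj).
  have qb : rho c != p1 by rewrite -rhob (inj_eq perm_inj).
  move: qa qb; rewrite !ordE vp1 /= => qa qb.
  have qm := ltn_ord (rho c).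
  have m1 : (1 < m)%N by lia.
  exists (nat_of_ord (rho c) - 2)%N; split; first by lia.
  move=> t.
  have kq : k (t * m.-1 + (rho c - 2))%N = rho c.
    apply: ord_inj; rewrite vk // modnMDl modn_small; lia.
  rewrite /T /W m1 permM kq tpermL /tp tpermD // ordE /=; lia.
pose K := n./2.
pose Z : vote m := if (a < b)%N then (tperm a b * VM)%g else (tperm a b * U)%g.
pose vo (i : nat) : vote m :=
  if (i < K.*2)%N then (if odd i then (W i./2 * tp)%g else W i./2) else Z.
pose P := [ffun i : 'I_n => vo i].
have Bsum : forall c, \sum_(i < n) s (P i c) =
    \sum_(j < K) T c j + (if odd n then s (Z c) else 0).
  move=> c; rewrite (eq_bigr (fun i : 'I_n => s (vo i c))); last by move=> i _; rewrite ffunE.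
  rewrite (sum_n (fun i => s (vo i c))) /=; congr (_ + _).
    apply: eq_bigr => j _.
    have j2 : (j.*2.+1 < K.*2)%N by have := ltn_ord j; lia.
    rewrite /vo ltn_double ltn_ord odd_double doubleK j2 /= odd_double /= uphalf_double.
    by rewrite permM.
  by rewrite /vo ltnn.
have SAB : \sum_(j < K) T a j = \sum_(j < K) T b j by apply: eq_bigr => j _; rewrite TA TB.
have D0 : 0 < s0 - sm.
  have := sle0 (VM a); have := sgem (VM b); lia.
have Sgap : forall c, c != a -> c != b ->
    \sum_(j < K) T c j + (s0 - sm) + (s0 - sm) + (s0 - sm) <= \sum_(j < K) T a j.
  move=> c ca cb; have [k0 [k0m Hk]] := TV c ca cb.
  have m1 : (1 < m)%N by lia.
  have := @le_sum3 (fun j => T a j - T c j) K (0 * m.-1 + k0) (1 * m.-1 + k0) (2 * m.-1 + k0).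
  have E : \sum_(j < K) (T a j - T c j) = \sum_(j < K) T a j - \sum_(j < K) T c j.
    by rewrite sumrB.
  rewrite E !Hk !TA => H.
  have g0 : forall i, 0 <= T a i - T c i.
    by move=> i; rewrite TA; have := TC c i ca cb; lia.
  have l12 : (0 * m.-1 + k0 < 1 * m.-1 + k0)%N by lia.
  have l23 : (1 * m.-1 + k0 < 2 * m.-1 + k0)%N by lia.
  have l3 : (2 * m.-1 + k0 < K)%N by rewrite /K; have := odd_double_half n; case: (odd n) => /=; lia.
  have := H g0 l12 l23 l3.
  have := sgem p1; rewrite -/s1. lia.
have TSv : forall V e, total_score s P V e =
    \sum_(j < K) T e j + (if odd n then s (Z e) else 0) + s (V e).
  by move=> V e; rewrite /total_score Bsum.
have Hoth : forall V e, e != a -> e != b ->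
    total_score s P V e < total_score s P V a /\ total_score s P V e < total_score s P V b.
  move=> V e ea eb; rewrite !TSv.
  have := Sgap e ea eb; have := sle0 (V e); have := sgem (V a); have := sgem (V b).
  have := SAB.
  case: (odd n) => /=; last by lia.
  have := sle0 (Z e); have := sgem (Z a); have := sgem (Z b); lia.
have abn : nat_of_ord a <> nat_of_ord b by move/ord_inj => e; rewrite e eqxx in ab.
have key : (total_score s P VM b < total_score s P VM a \/
             (total_score s P VM b = total_score s P VM a /\ (a < b)%N)) /\
           (total_score s P U a < total_score s P U b \/
             (total_score s P U a = total_score s P U b /\ (b < a)%N)).
  rewrite !TSv; have := SAB.
  case: (odd n) => /=; first last.
    by lia.
  rewrite /Z; case: ifP => hab; rewrite !permM ?tpermL ?tpermR; lia.
exists P; split; apply: winner_eq => e ea.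
  case: (eqVneq e b) => [->|eb]; first by case: key.
  by left; case: (Hoth VM e ea eb).
case: (eqVneq e a) => [->|eb]; first by case: key.
by left; case: (Hoth U e eb ea).
Qed.

Local Close Scope ring_scope.

(* m.+1 alternatives, so the hypothesis n >= 6 (|C| - 2) reads as below *)
Theorem theorem3 (m n : nat) (s : 'I_m.+1 -> int) :
  scoring_vector s ->
  (6 * (m.+1 - 2) <= n)%N ->
  immune s (@full_info_set m n).
Proof.
move=> sv hn VM [U [Hall [P0 [_ HP0]]]].
case: (boolP [forall c, s (U c) == s (VM c)]) => [/forallP Heq | /forallP Hne].
  have E : winner s P0 U = winner s P0 VM.
    have tsE : forall d, total_score s P0 U d = total_score s P0 VM d.
      by move=> d; rewrite /total_score (eqP (Heq d)).
    rewrite /winner /=; congr odflt; apply: eq_pick => c /=.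
    by apply: eq_forallb => d; rewrite !tsE.
  by move: HP0; rewrite E ltnn.
have [a [b [hV hU]]] : exists a b, (s (VM b) < s (VM a))%R /\ (s (U a) < s (U b))%R.
  have [c Hc] : exists c, s (U c) != s (VM c).
    by apply/existsP; rewrite -negb_forall; apply/negP => /forallP Hf; apply: Hne => c; exact: Hf.
  case: (ltrgtP (s (VM c)) (s (U c))) => [lt|lt|eq]; last by move: Hc; rewrite eq eqxx.
    have [e [h1 h2]] := thr lt.
    exists e, c; split => //; exact: (Order.POrderTheory.lt_le_trans lt h2).
  have [e [h1 h2]] := thr lt.
  exists c, e; split => //; exact: (Order.POrderTheory.lt_le_trans lt h2).
have [P [wV wU]] := construct sv hn hV hU.
have := Hall P I; rewrite wV wU leqNgt.
apply/negP/negPn; rewrite ltnNge; apply/negP => le.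
have := sv _ _ le; rewrite leNgt; by rewrite hV.
Qed.
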